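(* Let $R$ be an integral domain with field of fractions $K$, and let $U\in R^{m\times n}$ have rank $n$ over $K$ (so $n\le m$). Then $\mathrm{coker}(U)\cong R^{m-n}$ if and only if $\mathrm{coker}(UU^t)\cong R^{m-n}$.
   Context: For a matrix $B\in R^{m\times k}$, $\mathrm{coker}(B)=R^m/\mathrm{im}(B:R^k\to R^m)$; $U^t$ is the transpose. *)

(* Defs.v *)
From HB Require Import structures.
From mathcomp Require Import all_boot all_order all_algebra.
From mathcomp Require Import fraction.
Set Implicit Arguments. Unset Strict Implicit. Unset Printing Implicit Defensive.
Import Order.TTheory GRing.Theory Num.Theory.
Local Open Scope ring_scope.

Definition in_image (R : pzRingType) (m p : nat) (B : 'M[R]_(m, p))
  (x : 'cV[R]_m) : Prop := exists z : 'cV[R]_p, x = B *m z.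

(* coker(B) = R^m / im(B) is isomorphic (as an R-module) to R^k.
   Unfolded via the first isomorphism theorem: there is an R-linear map
   F : R^m -> R^k (every R-linear map R^m -> R^k is a k x m matrix)
   that is surjective and whose kernel is exactly im(B); F then induces
   the isomorphism R^m/im(B) ~= R^k, and conversely any isomorphism
   composed with the projection R^m -> coker(B) is such an F. *)
Definition coker_iso_free (R : comPzRingType) (m p k : nat)
  (B : 'M[R]_(m, p)) : Prop :=
  exists F : 'M[R]_(k, m),
    (forall y : 'cV[R]_k, exists x : 'cV[R]_m, F *m x = y) /\
    (forall x : 'cV[R]_m, F *m x = 0 <-> in_image B x).

(* Main.v *)
Require Import Defs.
From HB Require Import structures.
From mathcomp Require Import all_boot all_order all_algebra.
From mathcomp Require Import fraction generic_quotient.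
From mathcomp Require Import ring.
Import Order.TTheory GRing.Theory Num.Theory.
Local Open Scope ring_scope.

Lemma frac_clear (R : idomainType) (x : {fraction R}) :
  exists a b : R, b != 0 /\ x * tofrac b = tofrac a.
Proof.
elim/quotW: x => r.
exists (frac r).1, (frac r).2; split; first exact: denom_ratioP.
unlock tofrac.
rewrite /GRing.mul /=.
rewrite -FracField.pi_mul; apply/eqmodP; rewrite /= FracField.equivfE /FracField.mulf !numden_Ratio ?oner_neq0 ?mulf_neq0 ?denom_ratioP //.
- by rewrite !mulr1 mulrC.
all: exact: oner_neq0.
Qed.

Lemma key (R : idomainType) m n (U : 'M[R]_(m,n)) :
  \rank (map_mx (@tofrac R) U) = n ->
  exists d (W : 'M[R]_(n,m)), d != 0 /\ W *m U = d%:M.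
Proof.
move=> rk.
have /row_fullP [Wk WkU] : row_full (map_mx (@tofrac R) U) by rewrite /row_full rk.
have: forall ij : 'I_n * 'I_m, exists ab : R * R,
    ab.2 != 0 /\ Wk ij.1 ij.2 * tofrac ab.2 = tofrac ab.1.
  move=> ij; have [a [b [b0 e]]] := @frac_clear _ (Wk ij.1 ij.2); by exists (a,b).
case/fin_all_exists => f Hf.
set d := \prod_ij (f ij).2.
have d0 : d != 0 by apply/prodf_neq0 => ij _; case: (Hf ij).
set W := \matrix_(i,j) ((\prod_(ij | ij != (i,j)) (f ij).2) * (f (i,j)).1).
exists d, W; split => //.
have Hmap : map_mx (@tofrac R) W = tofrac d *: Wk.
  apply/matrixP => i j; rewrite !mxE.
  set P := \prod_(ij | ij != (i, j)) (f ij).2.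
  have e1 : tofrac (R:=R) (P * (f (i,j)).1) = tofrac P * tofrac (f (i,j)).1
    := tofracM _ _.
  have e2 : tofrac (R:=R) d = tofrac (f (i,j)).2 * tofrac P.
    rewrite /d (bigD1 (i,j)) //; exact: tofracM.
  apply: (etrans e1); rewrite e2 -(proj2 (Hf (i,j))).
  ring.
have E : map_mx (@tofrac R) (W *m U) = map_mx (@tofrac R) d%:M.
  by rewrite map_mxM Hmap -scalemxAl WkU scalemx1 map_scalar_mx.
apply/matrixP => i j; move/matrixP: E => /(_ i j); rewrite !mxE.
by move=> /eqP; rewrite tofrac_eq => /eqP.
Qed.

Lemma mx_col_eq (R : pzSemiRingType) p q (A B : 'M[R]_(p,q)) :
  (forall j : 'I_q, A *m delta_mx j (@ord0 0) = B *m delta_mx j (@ord0 0)) -> A = B.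
Proof.
move=> H; apply/matrixP => i j; move: (H j) => /matrixP/(_ i 0).
by rewrite -!colE !mxE.
Qed.

Lemma build_mx (R : pzSemiRingType) p q r (A : 'M[R]_(p,q)) (B : 'M[R]_(p, r)) :
  (forall j : 'I_q, exists y : 'cV[R]_r, A *m delta_mx j (@ord0 0) = B *m y) ->
  exists C : 'M[R]_(r,q), A = B *m C.
Proof.
move=> /fin_all_exists [g Hg].
exists (\matrix_(i, j) g j i 0); apply: mx_col_eq => j.
rewrite Hg -mulmxA -colE; congr (_ *m _); apply/colP => i.
by rewrite !mxE.
Qed.

Theorem proposition8p3 (R : idomainType) (m n : nat) (U : 'M[R]_(m, n)) :
  \rank (map_mx (@tofrac R) U) = n ->
  (coker_iso_free (m - n) U <-> coker_iso_free (m - n) (U *m U^T)).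
Proof.
move=> rk; have [d [W [d0 WU]]] := @key _ _ _ U rk.
have injU : forall p (M : 'M[R]_(n, p)), U *m M = 0 -> M = 0.
  move=> p M UM; apply/eqP; move: (congr1 (mulmx W) UM).
  rewrite mulmxA WU mul_scalar_mx mulmx0 => /eqP.
  by rewrite scalemx_eq0 (negbTE d0).
have sub : forall x, in_image (U *m U^T) x -> in_image U x.
  by move=> x [z ->]; exists (U^T *m z); rewrite mulmxA.
split.
- move=> [F [Fsur Fker]]; exists F; split => // x.
  have [G FG] : exists G : 'M[R]_(m, m - n), 1%:M = F *m G.
    apply: build_mx => j; have [y Hy] := Fsur (delta_mx j (@ord0 0)).
    by exists y; rewrite mul1mx.
  have [H GH] : exists H : 'M[R]_(n, m), 1%:M - G *m F = U *m H.
    apply: build_mx => j; apply/Fker.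
    by rewrite mulmxA mulmxBr mulmx1 mulmxA -FG mul1mx subrr mul0mx.
  have FU : F *m U = 0.
    apply: mx_col_eq => j; rewrite mul0mx -mulmxA; apply/Fker.
    by exists (delta_mx j (@ord0 0)).
  have HU : H *m U = 1%:M.
    apply/eqP; rewrite -subr_eq0; apply/eqP; apply: injU.
    rewrite mulmxBr mulmx1 mulmxA -GH mulmxBl mul1mx -mulmxA FU mulmx0.
    by rewrite subr0 subrr.
  split; last by move=> /sub /Fker.
  move=> /Fker [z ->]; exists (H^T *m z).
  by rewrite !mulmxA -(mulmxA U) -trmx_mul HU trmx1 mulmx1.
- move=> [F [Fsur Fker]]; exists F; split => // x.
  split; first by move=> /Fker /sub.
  move=> [z xz]; apply/eqP.
  suff : d *: (F *m x) == 0 by rewrite scalemx_eq0 (negbTE d0).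
  rewrite scalemxAr; apply/eqP/Fker.
  exists (W^T *m z).
  rewrite xz scalemxAr -mul_scalar_mx -tr_scalar_mx -WU trmx_mul.
  by rewrite !mulmxA.
Qed.
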